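(* Let $\varphi$ be a primitive $k$-uniform morphism on $\{0,1\}$ and let $w$ be an infinite fixed point of $\varphi$. The following are equivalent: 1. $w$ is bounded weak abelian periodic; 2. $w$ is abelian periodic; 3. $\varphi(0)\sim_{ab}\varphi(1)$, or $k$ is odd and $\varphi(0)=(01)^{\frac{k-1}{2}}0$, $\varphi(1)=(10)^{\frac{k-1}{2}}1$.
   Context: A morphism $\varphi$ on $\{0,1\}^*$ is $k$-uniform if $|\varphi(0)|=|\varphi(1)|=k$, and primitive if for some $m$ both $\varphi^m(0)$ and $\varphi^m(1)$ contain both letters. $|u|_a$ is the number of occurrences of letter $a$ in $u$; $u\sim_{ab}v$ (abelian equivalent) means $|u|_a=|v|_a$ for every letter $a$. For nonempty finite $u$, $\rho_a(u)=|u|_a/|u|$. An infinite word $w$ is abelian (ultimately) periodic if $w=v_0v_1v_2\cdots$ with finite words $v_i$ such that $v_i\sim_{ab}v_j$ for all $i,j\ge1$. It is weak abelian periodic if $w=v_0v_1v_2\cdots$ with $v_0$ finite and $v_1,v_2,\dots$ nonempty finite words with $\rho_a(v_i)=\rho_a(v_j)$ for all letters $a$ and all $i,j\ge1$, and bounded weak abelian periodic if such a factorization exists with $|v_i|\le C$ for all $i$ for some constant $C$. *)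

(* Defs.v *)
(* Alphabet {0,1} is encoded as bool: 0 = false, 1 = true. *)
From mathcomp Require Import all_boot all_order all_algebra.
Set Implicit Arguments. Unset Strict Implicit. Unset Printing Implicit Defensive.
Import GRing.Theory Num.Theory.

Definition morph := bool -> seq bool.

Definition morph_word (phi : morph) (u : seq bool) : seq bool := flatten (map phi u).
Definition morph_iter (phi : morph) (m : nat) (u : seq bool) : seq bool :=
  iter m (morph_word phi) u.

Definition uniform (phi : morph) (k : nat) : Prop :=
  size (phi false) = k /\ size (phi true) = k.

Definition primitive (phi : morph) : Prop :=
  exists m, forall a b : bool, b \in morph_iter phi m [:: a].

Definition iword := nat -> bool.
Definition prefix (w : iword) (n : nat) : seq bool := mkseq w n.

(* w is a fixed point of phi: phi(w) = w, i.e. for every n the image of the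
   length-n prefix of w is a prefix of w. *)
Definition fixed_point (phi : morph) (w : iword) : Prop :=
  forall n i, i < size (morph_word phi (prefix w n)) ->
    nth false (morph_word phi (prefix w n)) i = w i.

Definition factor (w : iword) (i j : nat) : seq bool := mkseq (fun t => w (i + t)) (j - i).

Definition abelian_eq (u v : seq bool) : Prop :=
  forall a : bool, count_mem a u = count_mem a v.

Definition rho (a : bool) (u : seq bool) : rat := (count_mem a u)%:R / (size u)%:R.

(* A factorization w = v_0 v_1 v_2 ... is encoded by cut points c : nat -> nat
   with v_0 = w[0, c 0) and v_(i+1) = w[c i, c (i+1)). The cuts must be
   nondecreasing and unbounded so that the concatenation is all of w. *)
Definition block (w : iword) (c : nat -> nat) (i : nat) : seq bool := factor w (c i) (c i.+1).

Definition abelian_periodic (w : iword) : Prop :=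
  exists c : nat -> nat,
    (forall i, c i <= c i.+1) /\ (forall N, exists i, N <= c i) /\
    (forall i j, abelian_eq (block w c i) (block w c j)).

(* Nonempty blocks: c strictly increasing (hence unbounded). *)
Definition weak_abelian_periodic_fact (w : iword) (c : nat -> nat) : Prop :=
  (forall i, c i < c i.+1) /\
  (forall i j (a : bool), rho a (block w c i) = rho a (block w c j)).

Definition weak_abelian_periodic (w : iword) : Prop :=
  exists c, weak_abelian_periodic_fact w c.

Definition bounded_weak_abelian_periodic (w : iword) : Prop :=
  exists c, weak_abelian_periodic_fact w c /\
    exists C, forall i, size (block w c i) <= C.

Definition alt01 (n : nat) : seq bool := flatten (nseq n [:: false; true]) ++ [:: false].
Definition alt10 (n : nat) : seq bool := flatten (nseq n [:: true; false]) ++ [:: true].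

(* Main.v *)
Require Import Defs.
From mathcomp Require Import all_boot all_order all_algebra.
From mathcomp Require Import zify.
From Stdlib Require Import Classical.
Local Notation prefix := Defs.prefix.
Set Implicit Arguments. Unset Strict Implicit. Unset Printing Implicit Defensive.

Lemma size_mw phi k u : uniform phi k -> size (morph_word phi u) = k * size u.
Proof.
move=> [H0 H1]; elim: u => [|x u IH] /=; first by rewrite muln0.
rewrite /morph_word /= size_cat -/(morph_word _ _) IH.
by case: x; rewrite ?H0 ?H1 mulnS.
Qed.

Lemma mw_rcons phi u x : morph_word phi (rcons u x) = morph_word phi u ++ phi x.
Proof. by rewrite /morph_word map_rcons flatten_rcons. Qed.

Lemma count_mw phi b u : count_mem b (morph_word phi u) =
  count_mem b (phi true) * count_mem true u + count_mem b (phi false) * count_mem false u.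
Proof.
elim: u => [|x u IH] /=; first by rewrite !muln0.
rewrite /morph_word /= count_cat -/(morph_word _ _) IH.
case: x => /=; lia.
Qed.

Lemma prefix_fix phi k w n : uniform phi k -> fixed_point phi w ->
  morph_word phi (prefix w n) = prefix w (k * n).
Proof.
move=> U F; apply: (@eq_from_nth _ false).
  by rewrite (size_mw _ U) /prefix !size_mkseq.
move=> i; rewrite (size_mw _ U) /prefix size_mkseq => Hi.
rewrite F ?nth_mkseq //; last by rewrite (size_mw _ U) size_mkseq.
Qed.

Lemma step phi k w n r : uniform phi k -> fixed_point phi w -> r < k ->
  w (k * n + r) = nth false (phi (w n)) r.
Proof.
move=> U F Hr.
have := prefix_fix n.+1 U F.
rewrite /prefix mkseqS mw_rcons -/(prefix w n) (prefix_fix _ U F) => E.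
have : nth false (prefix w (k * n) ++ phi (w n)) (k * n + r) =
       nth false (mkseq w (k * n.+1)) (k * n + r) by rewrite E.
rewrite nth_cat /prefix size_mkseq ltnNge leq_addr /= addKn nth_mkseq.
  by move=> ->.
rewrite mulnS; lia.
Qed.

Lemma take_prefix w m n : m <= n -> take m (prefix w n) = prefix w m.
Proof.
move=> H; apply: (@eq_from_nth _ false).
  by rewrite size_takel /prefix !size_mkseq.
move=> i; rewrite size_takel /prefix ?size_mkseq // => Hi.
rewrite nth_take; last lia.
rewrite !nth_mkseq //; lia.
Qed.

Lemma prefix_step phi k w n r : uniform phi k -> fixed_point phi w -> r <= k ->
  prefix w (k * n + r) = prefix w (k * n) ++ take r (phi (w n)).
Proof.
move=> U F Hr.
have E : prefix w (k * n.+1) = prefix w (k * n) ++ phi (w n).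
  rewrite -(prefix_fix _ U F) -(prefix_fix _ U F).
  by rewrite /Defs.prefix mkseqS mw_rcons.
rewrite -(@take_prefix w _ (k * n.+1)); last by rewrite mulnS; lia.
rewrite E take_cat /Defs.prefix size_mkseq ltnNge leq_addr /= addKn.
by [].
Qed.

Lemma prefix_add w m n : prefix w (m + n) = prefix w m ++ factor w m (m + n).
Proof.
rewrite /prefix /factor /mkseq iotaD map_cat addKn; congr (_ ++ _).
have -> : iota m n = map (addn m) (iota 0 n) by rewrite -iotaDl addn0.
by rewrite -map_comp.
Qed.

Import Order.TTheory GRing.Theory Num.Theory.

Definition cnt (w : iword) n := count_mem true (prefix w n).
Definition Eq (p q : nat) (w : iword) n : int := Posz (q * cnt w n)%N - Posz (p * n)%N.
Definition gg (phi : morph) (p q : nat) y r : int :=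
  Posz (q * count_mem true (take r (phi y)))%N - Posz (p * r)%N.
Definition lam (phi : morph) : int :=
  Posz (count_mem true (phi true)) - Posz (count_mem true (phi false)).
Definition KK (phi : morph) k (p q : nat) : int :=
  Posz (q * count_mem true (phi false))%N + lam phi * Posz p - Posz (p * k)%N.

Lemma count_false w n : count_mem false (prefix w n) + cnt w n = n.
Proof.
rewrite /cnt -{3}(size_mkseq w n) -/(prefix w n).
elim: (prefix w n) => [|x s IH] //=; case: x => /=; rewrite ?add0n ?add1n -IH ?addnS ?addSn //.
Qed.

Local Open Scope ring_scope.

Lemma E_step phi k w p q n r : uniform phi k -> fixed_point phi w -> (r <= k)%N ->
  Eq p q w (k * n + r) = lam phi * Eq p q w n + KK phi k p q * Posz n + gg phi p q (w n) r.
Proof.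
move=> U F Hr.
rewrite /Eq /gg /KK /lam /cnt (prefix_step n U F Hr) count_cat -(prefix_fix n U F) count_mw.
have := count_false w n; rewrite /cnt.
set a := count_mem true (phi true); set b := count_mem true (phi false).
set c := count_mem true (prefix w n); set z := count_mem false (prefix w n).
set t := count_mem true (take r (phi (w n))).
move=> Hz.
rewrite -Hz; clearbody a b c z t; nia.
Qed.

Lemma gg0 phi p q y : gg phi p q y 0 = 0.
Proof. by rewrite /gg take0 /= !muln0. Qed.

Lemma gg_succ phi k p q y r : uniform phi k -> (r < k)%N ->
  gg phi p q y r.+1 = gg phi p q y r + (Posz (q * nth false (phi y) r)%N - Posz p).
Proof.
move=> [U0 U1] Hr.
have Hs : (r < size (phi y))%N by case: y; rewrite ?U0 ?U1.
rewrite /gg (take_nth false Hs) -cats1 count_cat /=.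
case: (nth false (phi y) r) => /=; lia.
Qed.

Lemma lin_zero (K L : int) : (forall n : nat, `|K * Posz n| <= L) -> K = 0.
Proof.
move=> H; apply/eqP; apply: contraT => HK.
have := H (absz L).+1.
nia.
Qed.

Lemma prim_other phi z : primitive phi -> (~~ z) \in phi z.
Proof.
move=> [m Hm]; apply: contraT => Hn.
suff : all (pred1 z) (morph_iter phi m [:: z]).
  move/allP/(_ (~~z) (Hm z (~~z))) => /=; by clear; case: z.
elim: m {Hm} => [|m IH]; first by rewrite /= andbT.
rewrite /morph_iter iterS -/(morph_iter phi m [:: z]).
elim: (morph_iter phi m [:: z]) IH => [|x s IHs] //=.
move=> /andP [/eqP -> Hs]; rewrite /morph_word /= all_cat -/(morph_word _ _) IHs // andbT.
apply/allP => y Hy /=; apply: contraT => Hyz.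
by move: Hn Hy Hyz; clear; case: y; case: z => //= /negP H /H.
Qed.

Lemma count_mem_gt0 (b : bool) s : b \in s -> (0 < count_mem b s)%N.
Proof. by move=> H; rewrite -has_count has_pred1. Qed.

Lemma arith (a z c B : nat) : (0 < a -> a * z <= B -> c <= B -> z + c = (B+B).+1 -> False)%N.
Proof. nia. Qed.

Lemma no_bounded_count phi k w b (B : nat) : uniform phi k -> primitive phi ->
  fixed_point phi w -> (forall n, count_mem b (prefix w n) <= B)%N -> False.
Proof.
move=> U P F H.
have H1 := H (k * ((B + B).+1)).
rewrite -(prefix_fix _ U F) count_mw in H1.
have H2 := count_false w ((B + B).+1).
have H3 := H ((B + B).+1).
move: H1 H2 H3; rewrite /cnt; clear H.
have G1 : (0 < count_mem true (phi false))%N := count_mem_gt0 (prim_other false P).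
have G2 : (0 < count_mem false (phi true))%N := count_mem_gt0 (prim_other true P).
move: G1 G2.
case: b => G1 G2 H1 H2 H3.
- apply: (arith G1 _ H3 H2); exact: leq_trans (leq_addl _ _) H1.
- rewrite addnC in H2; apply: (arith G2 _ H3 H2); exact: leq_trans (leq_addr _ _) H1.
Qed.

Lemma occurs phi k w y : uniform phi k -> primitive phi -> fixed_point phi w ->
  exists n, w n = y.
Proof.
move=> U P F; apply: NNPP => Hn.
apply: (@no_bounded_count phi k w y 0 U P F) => n.
rewrite leqn0; apply/eqP.
elim: n => [|n IH] //; rewrite /Defs.prefix mkseqS -cats1 count_cat -/(Defs.prefix w n) IH /=.
by case: eqP => // E; case: Hn; exists n.
Qed.

Lemma cnt_split (s : seq bool) : (count_mem false s + count_mem true s)%N = size s.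
Proof. by elim: s => [|x s IH] //=; case: x => /=; rewrite ?add0n ?add1n -IH ?addnS ?addSn. Qed.

Lemma K_zero phi k w p q B : uniform phi k -> fixed_point phi w ->
  (forall n, `|Eq p q w n| <= B) -> KK phi k p q = 0.
Proof.
move=> U F HB; apply: (@lin_zero _ (B + `|lam phi| * B)) => n.
have := E_step p q n U F (leq0n k); rewrite gg0 addn0 addr0 => E.
have H1 := HB (k * n)%N; have H2 := HB n.
rewrite E in H1; move: H1 H2.
set l := lam phi; set K := KK phi k p q; set e := Eq p q w n.
have : `|l * e| = `|l| * `|e| by rewrite normrM.
have : 0 <= `|l| by [].
nia.
Qed.

Lemma p_ne0 phi k w p q B : uniform phi k -> primitive phi -> fixed_point phi w -> (0 < q)%N ->
  (forall n, `|Eq p q w n| <= B) -> p <> 0%N.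
Proof.
move=> U P F Hq HB Hp; apply: (@no_bounded_count phi k w true (absz B) U P F) => n.
have := HB n; rewrite /Eq /cnt Hp mul0n subr0.
set c := count_mem true _. nia.
Qed.

Lemma p_neq phi k w p q B : uniform phi k -> primitive phi -> fixed_point phi w -> (0 < q)%N ->
  (forall n, `|Eq p q w n| <= B) -> p <> q.
Proof.
move=> U P F Hq HB Hp; apply: (@no_bounded_count phi k w false (absz B) U P F) => n.
have := HB n; have := count_false w n; rewrite /Eq /cnt Hp.
set c := count_mem true _; set z := count_mem false _. nia.
Qed.

Lemma E_one p q w : Eq p q w 1 = Posz (q * w 0)%N - Posz p.
Proof. by rewrite /Eq /cnt /Defs.prefix /= muln1; case: (w 0). Qed.

Lemma E_one_ne0 p q w : p <> 0%N -> p <> q -> Eq p q w 1 != 0.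
Proof. by rewrite E_one; case: (w 0) => /=; rewrite ?muln1 ?muln0; lia. Qed.

Lemma lam_small phi k w p q B : uniform phi k -> primitive phi -> fixed_point phi w -> (0 < q)%N ->
  (forall n, `|Eq p q w n| <= B) -> `|lam phi| <= 1.
Proof.
move=> U P F Hq HB; rewrite leNgt; apply/negP => Hl.
have K0 := K_zero U F HB.
have E1 := @E_one_ne0 p q w (p_ne0 U P F Hq HB) (p_neq U P F Hq HB).
have Hm : forall m, Posz (2 ^ m)%N <= `|Eq p q w (k ^ m)|.
  elim => [|m IH]; first by rewrite !expn0; lia.
  have := E_step p q (k ^ m) U F (leq0n k); rewrite gg0 addr0 K0 mul0r addr0 addn0 -expnS => ->.
  rewrite normrM expnS PoszM.
  move: IH Hl; set a := `|lam phi|; set b := `|Eq p q w (k ^ m)|.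
  have : 0 <= a by []. nia.
have := Hm (absz B); have := HB (k ^ absz B)%N; have := ltn_expl (absz B) (isT : 1 < 2)%N.
lia.
Qed.

Lemma lam0_abel phi k : uniform phi k -> lam phi = 0 -> abelian_eq (phi false) (phi true).
Proof.
move=> [U0 U1] H; have E : count_mem true (phi false) = count_mem true (phi true).
  by move: H; rewrite /lam; lia.
case=> //; have := cnt_split (phi false); have := cnt_split (phi true).
rewrite U0 U1 E; lia.
Qed.

Lemma shift0 (E : nat -> int) (B : int) (Pr : nat -> Prop) (g : int) :
  (forall n, `|E n| <= B) -> (exists n0, Pr n0) ->
  (forall n, Pr n -> exists n', Pr n' /\ E n' = E n + g) -> g = 0.
Proof.
move=> HB [n0 H0] Hs.
have Hj : forall j : nat, exists n, Pr n /\ E n = E n0 + Posz j * g.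
  elim => [|j [n [Hn En]]]; first by exists n0; split => //; rewrite mul0r addr0.
  have [n' [Hn' En']] := Hs n Hn; exists n'; split => //.
  rewrite En' En -addn1 PoszD mulrDl mul1r addrA //.
apply/eqP; apply: contraT => Hg.
have [n [_ En]] := Hj ((absz B) + absz (E n0)).+1%N.
have := HB n; rewrite En.
have : 1 <= `|g| by lia.
have := HB n0.
set e := E n0; set j := ((absz B) + absz e).+1%N.
have Hjg : `|Posz j * g| = Posz j * `|g| by rewrite normrM.
nia.
Qed.

Lemma alternate phi k w p q B : uniform phi k -> primitive phi -> fixed_point phi w -> (0 < q)%N ->
  (forall n, `|Eq p q w n| <= B) -> lam phi * lam phi = 1 ->
  forall y r, (r.+1 < k)%N -> nth false (phi y) r.+1 = ~~ nth false (phi y) r.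
Proof.
move=> U P F Hq HB Hl y r Hr.
have K0 := K_zero U F HB.
have Hp0 := p_ne0 U P F Hq HB; have Hpq := p_neq U P F Hq HB.
have hs : forall (n r : nat), (r < k)%N ->
    w (k * n + r)%N = nth false (phi (w n)) r /\
    Eq p q w (k * n + r) = lam phi * Eq p q w n + gg phi p q (w n) r.
  move=> n r' Hr'; split; first exact: step.
  by rewrite (E_step p q n U F (ltnW Hr')) K0 mul0r addr0.
set z := nth false (phi y) r.
case: (boolP (nth false (phi y) r.+1 == z)) => [/eqP Hz|]; last first.
  by move: (nth false (phi y) r.+1) z => [] [].
exfalso.
have [s [Hs Ns]] : exists s, (s < k)%N /\ nth false (phi z) s = y.
  case: (eqVneq z y) => [Ezy|Hzy].
    by exists r; split; [exact: ltnW | rewrite Ezy; exact: Ezy].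
  have Hy : y = ~~ z by move: Hzy; move: (z) (y) => [] [].
  have Hi := prim_other z P.
  exists (index (~~ z) (phi z)); split; last by rewrite nth_index // Hy.
  move: U => [U0 U1]; have : (index (~~ z) (phi z) < size (phi z))%N by rewrite index_mem.
  by case: (z); rewrite ?U0 ?U1.
have Hex : exists n0, w n0 = y := occurs y U P F.
have G : forall r', (r' < k)%N -> nth false (phi y) r' = z ->
    lam phi * gg phi p q y r' + gg phi p q z s = 0.
  move=> r' Hr' Hz'; apply: (shift0 HB Hex) => n Hn.
  exists (k * (k * n + r') + s)%N.
  have [W1 E1] := hs n r' Hr'; rewrite Hn Hz' in W1 E1.
  have [W2 E2] := hs (k * n + r')%N s Hs; rewrite W1 Ns in W2.
  split => //; by rewrite E2 W1 E1 mulrDr mulrA Hl mul1r -addrA.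
have G1 := G r (ltnW Hr) erefl.
have G2 := G r.+1 Hr Hz.
rewrite (gg_succ _ _ _ U (ltnW Hr)) -/z in G2.
move: G1 G2 Hl; set l := lam phi; set a := gg phi p q y r; set b := gg phi p q z s.
move=> G1 G2 Hl; rewrite mulrDr in G2.
set t := (Posz (q * z)%N - Posz p) in G2.
have H : l * t = 0 by lia.
have : t = 0 by rewrite -[t]mul1r -Hl -mulrA H mulr0.
rewrite /t; case: (z) => /=; rewrite ?muln1 ?muln0; lia.
Qed.

Lemma mkseq_cons T (f : nat -> T) m : mkseq f m.+1 = f 0%N :: mkseq (fun i => f i.+1) m.
Proof.
rewrite /mkseq /= -[in iota 1 m](addn0 1%N) iotaDl -map_comp; congr (_ :: _).
Qed.

Lemma alt_odd b n : mkseq (fun r => b (+) odd r) (n.*2.+1) = flatten (nseq n [:: b; ~~ b]) ++ [:: b].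
Proof.
elim: n => [|n IH]; first by case: b.
rewrite doubleS mkseq_cons mkseq_cons /=.
have -> : b (+) false = b by case: (b).
have -> : b (+) true = ~~ b by case: (b).
congr (_ :: _ :: _); rewrite -IH; apply: eq_mkseq => i /=; by rewrite negbK.
Qed.

Lemma alt_cnt b c n : count_mem c (mkseq (fun r => b (+) odd r) n.*2) = n.
Proof.
elim: n => [|n IH]; first by [].
rewrite doubleS mkseq_cons mkseq_cons /=.
have -> : mkseq (fun i => b (+) ~~ ~~ odd i) n.*2 = mkseq (fun r => b (+) odd r) n.*2.
  by apply: eq_mkseq => i /=; rewrite negbK.
rewrite IH; clear IH; case: b; case: c => /=; lia.
Qed.

Lemma alt_form phi k y : uniform phi k ->
  (forall r, (r.+1 < k)%N -> nth false (phi y) r.+1 = ~~ nth false (phi y) r) ->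
  phi y = mkseq (fun r => nth false (phi y) 0 (+) odd r) k.
Proof.
move=> [U0 U1] H.
have Sz : size (phi y) = k by case: y H; rewrite ?U0 ?U1.
apply: (@eq_from_nth _ false); first by rewrite size_mkseq.
move=> i; rewrite Sz => Hi; rewrite nth_mkseq //.
elim: i Hi => [|i IH] Hi; first by rewrite addbF.
rewrite H // IH ?(ltnW Hi) //=; by case: (nth false (phi y) 0); case: (odd i).
Qed.

Lemma k_pos phi k : uniform phi k -> primitive phi -> (0 < k)%N.
Proof.
move=> [U0 U1] P; have := prim_other false P; rewrite -U0.
by case: (phi false).
Qed.

Lemma core phi k w p q B : uniform phi k -> primitive phi -> fixed_point phi w -> (0 < q)%N ->
  (forall n, `|Eq p q w n| <= B) ->
  abelian_eq (phi false) (phi true) \/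
  (odd k /\ phi false = alt01 (k.-1./2) /\ phi true = alt10 (k.-1./2)).
Proof.
move=> U P F Hq HB.
have Hs := lam_small U P F Hq HB.
have [H0|H1] : lam phi = 0 \/ lam phi * lam phi = 1 by nia.
  by left; apply: lam0_abel U H0.
have A := alternate U P F Hq HB H1.
have Af := alt_form U (A false); have At := alt_form U (A true).
have Hk := k_pos U P.
have W0 : w 0%N = nth false (phi (w 0%N)) 0 by have := @step phi k w 0 0 U F Hk; rewrite muln0.
move: Af At W0.
set b0 := nth false (phi false) 0; set b1 := nth false (phi true) 0.
move=> Af At W0.
have [Eb|Nb] := eqVneq b0 b1.
  by left; rewrite Af At Eb.
have [[E0 E1]|[E0 E1]] : (b0 = false /\ b1 = true) \/ (b0 = true /\ b1 = false).
  by move: Nb; case: (b0); case: (b1); auto.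
- rewrite Af At E0 E1; case Ok: (odd k).
  + right; split => //.
    have Hk2 : k = (k.-1./2).*2.+1.
      have := odd_double_half k.-1; rewrite -(prednK Hk) /= in Ok *.
      by move: Ok; case: (odd k.-1) => //= _; rewrite add0n => ->.
    move: Hk2; set n := k.-1./2 => Hk2.
    rewrite /alt01 /alt10 Hk2 !alt_odd //.
  + left; have Hk2 : k = (k./2).*2.
      by have := odd_double_half k; rewrite Ok add0n => ->.
    by move=> c; rewrite Hk2 !alt_cnt.
- exfalso; move: W0; case: (w 0%N) => /=; rewrite -/b0 -/b1; by rewrite ?E0 ?E1.
Qed.

Local Open Scope ring_scope.

Lemma cnt_succ w n : cnt w n.+1 = (cnt w n + w n)%N.
Proof. by rewrite /cnt /Defs.prefix mkseqS -cats1 count_cat /=; case: (w n). Qed.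

Lemma E_lip p q w m d : `|Eq p q w (m + d) - Eq p q w m| <= Posz ((p + q) * d)%N.
Proof.
elim: d => [|d IH]; first by rewrite addn0 subrr muln0.
rewrite addnS /Eq cnt_succ; move: IH; rewrite /Eq.
set a := cnt w (m + d); set b := cnt w m.
case: (w (m + d)) => /=; nia.
Qed.

Lemma bwap_E w : bounded_weak_abelian_periodic w ->
  exists p q B, (0 < q)%N /\ forall n, `|Eq p q w n| <= B.
Proof.
move=> [c [[Hinc Hrho] [C HC]]].
set p := count_mem true (block w c 0); set q := size (block w c 0).
have Sz : forall i, size (block w c i) = (c i.+1 - c i)%N by move=> i; rewrite size_mkseq.
have Hq : (0 < q)%N by rewrite /q Sz subn_gt0.
have Hd : forall i, (count_mem true (block w c i) * q = p * size (block w c i))%N.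
  move=> i; have := Hrho i 0%N true; rewrite /rho => /eqP.
  rewrite eqr_div; last 2 first.
  - by rewrite pnatr_eq0 Sz; have := Hinc i; lia.
  - by rewrite pnatr_eq0 -/q; lia.
  by rewrite -!natrM eqr_nat => /eqP.
have Hs : forall i, cnt w (c i.+1) = (cnt w (c i) + count_mem true (block w c i))%N.
  move=> i; have E : c i.+1 = (c i + (c i.+1 - c i))%N by have := Hinc i; lia.
  by rewrite /cnt {1}E prefix_add count_cat -E.
have Hc : forall i, Eq p q w (c i) = Eq p q w (c 0%N).
  elim => [|i IH] //; rewrite -IH /Eq Hs.
  have := Hd i; rewrite Sz; have := Hinc i.
  set t := count_mem true _; set u := cnt w (c i); nia.
have Loc : forall d, exists i, (c i <= c 0%N + d < c i.+1)%N.
  elim => [|d [i Hi]]; first by exists 0%N; rewrite addn0 leqnn Hinc.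
  case: (ltnP (c 0%N + d.+1) (c i.+1)) => H.
    by exists i; rewrite H andbT; move: Hi; lia.
  exists i.+1; rewrite H /=; have := Hinc i.+1; move: Hi H; lia.
exists p, q, (`|Eq p q w (c 0%N)| + Posz ((p + q) * (C + c 0%N))%N); split => // n.
case: (ltnP n (c 0%N)) => Hn.
  have := E_lip p q w n (c 0%N - n); rewrite subnKC ?(ltnW Hn) //.
  have : ((p + q) * (c 0%N - n) <= (p + q) * (C + c 0%N))%N by apply: leq_mul => //; lia.
  lia.
have [i Hi] := Loc (n - c 0%N)%N; rewrite subnKC // in Hi.
have := E_lip p q w (c i) (n - c i); rewrite subnKC; last by lia.
rewrite Hc.
have := HC i; rewrite Sz => HCi.
have : ((p + q) * (n - c i) <= (p + q) * (C + c 0%N))%N by apply: leq_mul => //; lia.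
lia.
Qed.

Lemma block_phi phi k w i : uniform phi k -> fixed_point phi w ->
  block w (fun j => k * j)%N i = phi (w i).
Proof.
move=> U F; have [U0 U1] := U.
have Sz : size (phi (w i)) = k by case: (w i).
have Ek : (k * i.+1 - k * i = k)%N by rewrite mulnS; lia.
apply: (@eq_from_nth _ false); first by rewrite size_mkseq Sz Ek.
move=> t; rewrite size_mkseq Ek => Ht.
rewrite nth_mkseq ?Ek //=; exact: (step i U F Ht).
Qed.

Lemma k_gt1 phi k : uniform phi k -> primitive phi -> (1 < k)%N.
Proof.
move=> U [m Hm]; rewrite ltnNge; apply/negP => Hk.
have Hs : forall m, size (morph_iter phi m [:: false]) = (k ^ m)%N.
  elim => [|j IH] //; rewrite /morph_iter iterS -/(morph_iter phi j _) (size_mw _ U) IH expnS.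
  by rewrite mulnC.
have := Hs m; have := Hm false false; have := Hm false true.
case: (morph_iter phi m [:: false]) => [|x [|y s]] //=.
  by rewrite !inE => /eqP <-.
move=> _ _ E; move: Hk; case: k E {U Hm Hs} => [|[|k']] E //= _.
- by move: E; case: m => // m'; rewrite exp0n.
- by rewrite exp1n in E.
Qed.

Lemma alt_w phi k w : uniform phi k -> fixed_point phi w -> (1 < k)%N -> odd k ->
  phi false = alt01 (k.-1./2) -> phi true = alt10 (k.-1./2) ->
  forall i, w i = w 0%N (+) odd i.
Proof.
move=> U F Hk1 Ok H0 H1.
have Hk : (0 < k)%N by lia.
have Hk2 : k = (k.-1./2).*2.+1.
  have := odd_double_half k.-1; rewrite -(prednK Hk) /= in Ok *.
  by move: Ok; case: (odd k.-1) => //= _; rewrite add0n => ->.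
have Ny : forall y r, (r < k)%N -> nth false (phi y) r = y (+) odd r.
  move=> y r Hr; case: y.
  - by rewrite H1 /alt10 -(alt_odd true) -Hk2 nth_mkseq.
  - by rewrite H0 /alt01 -(alt_odd false) -Hk2 nth_mkseq.
move=> i; elim: i {-2}i (leqnn i) => [|m IH] i Hi.
  by move: Hi; rewrite leqn0 => /eqP ->; case: (w 0%N).
case: (posnP i) => [->|Hi0]; first by case: (w 0%N).
have Hr : (i %% k < k)%N by rewrite ltn_mod.
have Ei : i = (k * (i %/ k) + i %% k)%N by rewrite mulnC -divn_eq.
rewrite Ei (step _ U F Hr) Ny // IH; last first.
  have : (i %/ k < i)%N by rewrite ltn_Pdiv.
  lia.
rewrite oddD oddM Ok /=; by case: (w 0%N); case: (odd _); case: (odd _).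
Qed.

Lemma cond3_ap phi k w : uniform phi k -> primitive phi -> fixed_point phi w ->
  (abelian_eq (phi false) (phi true) \/
   (odd k /\ phi false = alt01 (k.-1./2) /\ phi true = alt10 (k.-1./2))) ->
  abelian_periodic w.
Proof.
move=> U P F [H|[Ok [H0 H1]]].
  exists (fun j => k * j)%N; have Hk := k_pos U P; split; [|split].
  - by move=> i; rewrite leq_mul2l ltnW ?orbT.
  - by move=> N; exists N; rewrite leq_pmull.
  move=> i j; rewrite !(block_phi _ U F).
  case: (w i); case: (w j) => // a; by rewrite H.
exists (fun j => 2 * j)%N; split; [|split].
- by move=> i; lia.
- by move=> N; exists N; lia.
have Hb : forall i, block w (fun j => 2 * j)%N i = [:: w 0%N; ~~ w 0%N].
  move=> i; rewrite /block /factor.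
  have -> : (2 * i.+1 - 2 * i = 2)%N by lia.
  have Aw := alt_w U F (k_gt1 U P) Ok H0 H1.
  rewrite /mkseq /= (Aw (2 * i + 0)%N) (Aw (2 * i + 1)%N) addn0 addn1 /= oddM /=.
  by case: (w 0%N).
by move=> i j a; rewrite !Hb.
Qed.

Lemma ap_bwap w : abelian_periodic w -> bounded_weak_abelian_periodic w.
Proof.
move=> [c [Hm [Hu Hab]]].
set L := size (block w c 0).
have Sz : forall i, size (block w c i) = L.
  move=> i; rewrite /L -!cnt_split; by rewrite !(Hab i 0%N).
have Sz' : forall i, (c i.+1 - c i)%N = L by move=> i; rewrite -(Sz i) size_mkseq.
have HL : (0 < L)%N.
  rewrite lt0n; apply/negP => /eqP HL.
  have Cc : forall i, c i = c 0%N.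
    elim => [|i IH] //; have := Sz' i; have := Hm i; lia.
  have [i Hi] := Hu (c 0%N).+1; rewrite Cc in Hi; lia.
exists c; split; last by exists L => i; rewrite Sz.
split; first by move=> i; have := Sz' i; have := Hm i; lia.
by move=> i j a; rewrite /rho Sz (Sz j) (Hab i j a).
Qed.

Lemma bwap_cond3 phi k w : uniform phi k -> primitive phi -> fixed_point phi w ->
  bounded_weak_abelian_periodic w ->
  (abelian_eq (phi false) (phi true) \/
   (odd k /\ phi false = alt01 (k.-1./2) /\ phi true = alt10 (k.-1./2))).
Proof.
move=> U P F H; have [p [q [B [Hq HB]]]] := bwap_E H.
exact: (core U P F Hq HB).
Qed.

Local Close Scope ring_scope.

Theorem theorem2 (phi : morph) (k : nat) (w : iword) :
  uniform phi k -> primitive phi -> fixed_point phi w ->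
  [/\ (bounded_weak_abelian_periodic w <-> abelian_periodic w)
    & (abelian_periodic w <->
       (abelian_eq (phi false) (phi true) \/
        (odd k /\ phi false = alt01 (k.-1./2) /\ phi true = alt10 (k.-1./2))))].
Proof.
move=> U P F; split; split.
- by move=> H; apply: (cond3_ap U P F); apply: (bwap_cond3 U P F).
- exact: ap_bwap.
- by move=> H; apply: (bwap_cond3 U P F); apply: ap_bwap.
- exact: (cond3_ap U P F).
Qed.
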